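(* Let $\alpha_1,\alpha_2,\beta_2,\beta_3,\beta_4,\delta_1,\delta_2,\delta_4>0$ and consider the autonomous system $$u_1'=u_1(1-u_1-\alpha_1u_2-\delta_1u_3),\ u_2'=\beta_2u_2(1-u_2-\alpha_2u_1-\delta_2u_4),\ u_3'=\beta_3(u_2-u_3),\ u_4'=\beta_4(1-u_4-\delta_4u_4u_2).$$ It has the following steady states, with the stated linear stability properties: SS1: $(0,0,0,1)$ is unstable for all parameter values. SS2: $(1,0,0,1)$ is stable iff $\alpha_2+\delta_2>1$. SS3: $(0,\hat u_{2\pm},\hat u_{2\pm},[1+\delta_4\hat u_{2\pm}]^{-1})$ with $\hat u_{2\pm}=[\delta_4-1\pm\sqrt{(1+\delta_4)^2-4\delta_2\delta_4}]/(2\delta_4)$. The one with $\hat u_{2-}$ is unstable for all parameter values; the one with $\hat u_{2+}$ is stable iff $\delta_2<\frac{(\alpha_1+\delta_1+\delta_4)(\alpha_1+\delta_1-1)}{(\alpha_1+\delta_1)^2}$, or $\frac{(\alpha_1+\delta_1+\delta_4)(\alpha_1+\delta_1-1)}{(\alpha_1+\delta_1)^2}\le\delta_2<\frac{(1+\delta_4)^2}{4\delta_4}$ and $\frac1{\delta_4}<\frac{\alpha_1+\delta_1-2}{\alpha_1+\delta_1}$. SS4: $(1-(\alpha_1+\delta_1)\tilde u_{2\pm},\tilde u_{2\pm},\tilde u_{2\pm},[1+\delta_4\tilde u_{2\pm}]^{-1})$ where, writing $A=1-\alpha_2(\alpha_1+\delta_1)$, $$\tilde u_{2\pm}=\frac{-A-\delta_4(\alpha_2-1)\pm\sqrt{[A-\delta_4(\alpha_2-1)]^2-4\delta_2\delta_4A}}{2\delta_4A}.$$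 The one with $\tilde u_{2-}$ is not stable for any parameter values for which all its components are positive. The one with $\tilde u_{2+}$ (write $\tilde u_2=\tilde u_{2+}$) is stable iff $0<(\alpha_1+\delta_1)\tilde u_{2+}<1$, $0<\delta_2<\frac{[A-\delta_4(\alpha_2-1)]^2}{4\delta_4A}$ and $c_1c_2c_3>c_3^2c_0+c_1^2$, where $c_3=1-(\alpha_1+\delta_1)\tilde u_2+\beta_3+\beta_2\tilde u_2+\beta_4(1+\delta_4\tilde u_2)$, $c_2=\beta_3[\beta_2\tilde u_2+\beta_4(1+\delta_4\tilde u_2)]+[1-(\alpha_1+\delta_1)\tilde u_2][\beta_3+\beta_4(1+\delta_4\tilde u_2)+\beta_2\tilde u_2(1-\alpha_2\alpha_1)]+\frac{\beta_2\beta_4\tilde u_2}{1+\delta_4\tilde u_2}[(1+\delta_4\tilde u_2)^2-\delta_2\delta_4]$, $c_1=[1-(\alpha_1+\delta_1)\tilde u_2]\Big[\frac{\beta_2\beta_4\tilde u_2}{1+\delta_4\tilde u_2}[(1+\delta_4\tilde u_2)^2(1-\alpha_2\alpha_1)-\delta_2\delta_4]+\beta_3\beta_4(1+\delta_4\tilde u_2)\Big]+\beta_2\beta_3\tilde u_2[1-(\alpha_1+\delta_1)\tilde u_2]A+\frac{\beta_2\beta_3\beta_4\tilde u_2}{1+\delta_4\tilde u_2}[(1+\delta_4\tilde u_2)^2-\delta_2\delta_4]$, $c_0=\frac{\beta_2\beta_3\beta_4\tilde u_2}{1+\delta_4\tilde u_2}[1-(\alpha_1+\delta_1)\tilde u_2][(1+\delta_4\tilde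 u_2)^2A-\delta_2\delta_4]$.
   Context: ''Stable'' means linearly stable: all eigenvalues of the Jacobian of the right-hand side at the steady state have negative real part; ''unstable'' means the Jacobian has an eigenvalue with positive real part. *)

(* Defs.v *)
From HB Require Import structures.
From mathcomp Require Import all_boot all_order all_algebra.
From mathcomp Require Import all_classical all_reals all_analysis.
From mathcomp Require Import complex.
Set Implicit Arguments. Unset Strict Implicit. Unset Printing Implicit Defensive.
Import Order.TTheory GRing.Theory Num.Theory.
Local Open Scope ring_scope.

Section Model.
Variable R : realType.

(* A state (u1,u2,u3,u4) is a function 'I_4 -> R; coordinate k (0-based) is u_{k+1}. *)
Definition pt4 (x1 x2 x3 x4 : R) : 'I_4 -> R :=
  fun i => nth 0 [:: x1; x2; x3; x4] i.

Definition rhs (a1 a2 b2 b3 b4 d1 d2 d4 : R) (u : 'I_4 -> R) (i : 'I_4) : R :=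
  let u1 := u (inord 0) in let u2 := u (inord 1) in
  let u3 := u (inord 2) in let u4 := u (inord 3) in
  match val i with
  | 0 => u1 * (1 - u1 - a1 * u2 - d1 * u3)
  | 1 => b2 * u2 * (1 - u2 - a2 * u1 - d2 * u4)
  | 2 => b3 * (u2 - u3)
  | _ => b4 * (1 - u4 - d4 * u4 * u2)
  end.

Definition upd (u : 'I_4 -> R) (j : 'I_4) (t : R) : 'I_4 -> R :=
  fun k => if k == j then t else u k.

Definition jacobian (F : ('I_4 -> R) -> 'I_4 -> R) (u : 'I_4 -> R) : 'M[R]_4 :=
  \matrix_(i < 4, j < 4) derive1 (fun t => F (upd u j t) i) (u j).

Definition steady_state (F : ('I_4 -> R) -> 'I_4 -> R) (u : 'I_4 -> R) : Prop :=
  forall i, F u i = 0.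

Definition cplx_mx (M : 'M[R]_4) : 'M[R[i]]_4 := map_mx (fun x => (x%:C)%C) M.

Definition lin_stable F u : Prop :=
  forall z : R[i], eigenvalue (cplx_mx (jacobian F u)) z -> complex.Re z < 0.

Definition lin_unstable F u : Prop :=
  exists z : R[i], eigenvalue (cplx_mx (jacobian F u)) z /\ 0 < complex.Re z.

End Model.

(* Main.v *)
Require Import Defs.
From HB Require Import structures.
From mathcomp Require Import all_boot all_order all_algebra.
From mathcomp Require Import all_classical all_reals all_analysis.
From mathcomp Require Import complex.
From mathcomp Require Import ring lra.
Import Order.TTheory GRing.Theory Num.Theory.
Local Open Scope ring_scope.
Set Implicit Arguments. Unset Strict Implicit.
Section G. Variable R : realType.
Definition ek1 {F : comNzRingType} (m : nat -> nat -> F) : F := m 0 0 + m 1 1 + m 2 2 + m 3 3.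
Definition ek2 {F : comNzRingType} (m : nat -> nat -> F) : F := (m 0 0* m 1 1 - m 0 1* m 1 0) + (m 0 0* m 2 2 - m 0 2* m 2 0) + (m 0 0* m 3 3 - m 0 3* m 3 0) + (m 1 1* m 2 2 - m 1 2* m 2 1) + (m 1 1* m 3 3 - m 1 3* m 3 1) + (m 2 2* m 3 3 - m 2 3* m 3 2).
Definition ek3 {F : comNzRingType} (m : nat -> nat -> F) : F := (m 0 0* m 1 1* m 2 2 - m 0 0* m 1 2* m 2 1 - m 0 1* m 1 0* m 2 2 + m 0 1* m 1 2* m 2 0 + m 0 2* m 1 0* m 2 1 - m 0 2* m 1 1* m 2 0) + (m 0 0* m 1 1* m 3 3 - m 0 0* m 1 3* m 3 1 - m 0 1* m 1 0* m 3 3 + m 0 1* m 1 3* m 3 0 + m 0 3* m 1 0* m 3 1 - m 0 3* m 1 1* m 3 0) + (m 0 0* m 2 2* m 3 3 - m 0 0* m 2 3* m 3 2 - m 0 2* m 2 0* m 3 3 + m 0 2* m 2 3* m 3 0 + m 0 3* m 2 0* m 3 2 - m 0 3* m 2 2* m 3 0) + (m 1 1* m 2 2* m 3 3 - m 1 1* m 2 3* m 3 2 - m 1 2* m 2 1* m 3 3 + m 1 2* m 2 3* m 3 1 + m 1 3* m 2 1* m 3 2 - m 1 3* m 2 2* m 3 1).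
Definition ek4 {F : comNzRingType} (m : nat -> nat -> F) : F := (m 0 0* m 1 1* m 2 2* m 3 3 - m 0 0* m 1 1* m 2 3* m 3 2 - m 0 0* m 1 2* m 2 1* m 3 3 + m 0 0* m 1 2* m 2 3* m 3 1 + m 0 0* m 1 3* m 2 1* m 3 2 - m 0 0* m 1 3* m 2 2* m 3 1 - m 0 1* m 1 0* m 2 2* m 3 3 + m 0 1* m 1 0* m 2 3* m 3 2 + m 0 1* m 1 2* m 2 0* m 3 3 - m 0 1* m 1 2* m 2 3* m 3 0 - m 0 1* m 1 3* m 2 0* m 3 2 + m 0 1* m 1 3* m 2 2* m 3 0 + m 0 2* m 1 0* m 2 1* m 3 3 - m 0 2* m 1 0* m 2 3* m 3 1 - m 0 2* m 1 1* m 2 0* m 3 3 + m 0 2* m 1 1* m 2 3* m 3 0 + m 0 2* m 1 3* m 2 0* m 3 1 - m 0 2* m 1 3* m 2 1* m 3 0 - m 0 3* m 1 0* m 2 1* m 3 2 + m 0 3* m 1 0* m 2 2* m 3 1 + m 0 3* m 1 1* m 2 0* m 3 2 - m 0 3* m 1 1* m 2 2* m 3 0 - m 0 3* m 1 2* m 2 0* m 3 1 + m 0 3* m 1 2* m 2 1* m 3 0).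
Lemma det4 (F : comNzRingType) (f : nat -> nat -> F) :
  \det (\matrix_(i < 4, j < 4) f i j) = f 0 0*f 1 1*f 2 2*f 3 3 - f 0 0*f 1 1*f 2 3*f 3 2 - f 0 0*f 1 2*f 2 1*f 3 3 + f 0 0*f 1 2*f 2 3*f 3 1 + f 0 0*f 1 3*f 2 1*f 3 2 - f 0 0*f 1 3*f 2 2*f 3 1 - f 0 1*f 1 0*f 2 2*f 3 3 + f 0 1*f 1 0*f 2 3*f 3 2 + f 0 1*f 1 2*f 2 0*f 3 3 - f 0 1*f 1 2*f 2 3*f 3 0 - f 0 1*f 1 3*f 2 0*f 3 2 + f 0 1*f 1 3*f 2 2*f 3 0 + f 0 2*f 1 0*f 2 1*f 3 3 - f 0 2*f 1 0*f 2 3*f 3 1 - f 0 2*f 1 1*f 2 0*f 3 3 + f 0 2*f 1 1*f 2 3*f 3 0 + f 0 2*f 1 3*f 2 0*f 3 1 - f 0 2*f 1 3*f 2 1*f 3 0 - f 0 3*f 1 0*f 2 1*f 3 2 + f 0 3*f 1 0*f 2 2*f 3 1 + f 0 3*f 1 1*f 2 0*f 3 2 - f 0 3*f 1 1*f 2 2*f 3 0 - f 0 3*f 1 2*f 2 0*f 3 1 + f 0 3*f 1 2*f 2 1*f 3 0.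
Proof.
rewrite (expand_det_row _ ord0) !big_ord_recl big_ord0 /cofactor.
rewrite !(expand_det_row _ ord0) !big_ord_recl !big_ord0 /cofactor.
rewrite !(expand_det_row _ ord0) !big_ord_recl !big_ord0 /cofactor.
rewrite !det_mx11 !mxE /= /bump /=.
ring.
Qed.
Lemma charE (F : comNzRingType) (m : nat -> nat -> F) (z : F) :
  \det (\matrix_(i < 4, j < 4) (m i j - z *+ (i == j)%N)) =
  z ^+ 4 - (ek1 m) * z ^+ 3 + (ek2 m) * z ^+ 2 - (ek3 m) * z + (ek4 m).
Proof.
rewrite (@det4 _ (fun a b => m a b - z *+ (a == b)%N)) /= !mulr1n !mulr0n /ek1 /ek2 /ek3 /ek4.
ring.
Qed.
Local Open Scope complex_scope.
Lemma ek1C (m : nat -> nat -> R) : ek1 (fun i j => (m i j)%:C) = (ek1 m)%:C.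
Proof. by rewrite /ek1 !rmorphD. Qed.
Lemma ek2C (m : nat -> nat -> R) : ek2 (fun i j => (m i j)%:C) = (ek2 m)%:C.
Proof. by rewrite /ek2 !rmorphD ?rmorphN !rmorphM. Qed.
Lemma ek3C (m : nat -> nat -> R) : ek3 (fun i j => (m i j)%:C) = (ek3 m)%:C.
Proof. by rewrite /ek3 !rmorphD ?rmorphN !rmorphM. Qed.
Lemma ek4C (m : nat -> nat -> R) : ek4 (fun i j => (m i j)%:C) = (ek4 m)%:C.
Proof. by rewrite /ek4 !rmorphD ?rmorphN !rmorphM. Qed.

Lemma eig_char (m : nat -> nat -> R) (z : R[i]) :
  eigenvalue (cplx_mx (\matrix_(i < 4, j < 4) m i j)) z <->
  z ^+ 4 - (ek1 m)%:C * z ^+ 3 + (ek2 m)%:C * z ^+ 2 - (ek3 m)%:C * z + (ek4 m)%:C = 0.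
Proof.
rewrite /eigenvalue /eigenspace /= kermx_eq0 row_free_unit unitmxE unitfE negbK.
have -> : cplx_mx (\matrix_(i < 4, j < 4) m i j) - z%:M =
   \matrix_(i < 4, j < 4) ((m i j)%:C - z *+ (i == j)%N).
  by apply/matrixP => i j; rewrite !mxE.
rewrite (@charE _ (fun a b => (m a b)%:C)) -ek1C -ek2C -ek3C -ek4C.
by split => /eqP.
Qed.
End G.
Section J.
Variable R : realType.
Lemma dquad (a b c x : R) :
  derive1 (fun t : R => a * t * t + b * t + c) x = a * x + a * x + b.
Proof.
have -> : (fun t : R => a * t * t + b * t + c) =
          horner (a%:P * 'X * 'X + b%:P * 'X + c%:P).
  by apply/funext => t; rewrite !hornerE.
rewrite -derive.derivE !poly.derivE !hornerE /=.
ring.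
Qed.
Lemma dq (f : R -> R) (a b x : R) :
  (forall t, f t = a * t * t + b * t + f 0) -> derive1 f x = a * x + a * x + b.
Proof.
move=> H; have -> : f = (fun t : R => a * t * t + b * t + f 0) by apply/funext.
exact: dquad.
Qed.
Lemma inordE (j : 'I_4) k : (k < 4)%N -> (@inord 3 k == j) = (k == val j).
Proof. by move=> hk; rewrite -val_eqE /= inordK. Qed.

Definition J4 (a1 a2 b2 b3 b4 d1 d2 d4 x1 x2 x3 x4 : R) (i j : nat) : R :=
  match i, j with
  | 0, 0 => 1 - 2 * x1 - a1 * x2 - d1 * x3
  | 0, 1 => - (a1 * x1)
  | 0, 2 => - (d1 * x1)
  | 1, 0 => - (b2 * a2 * x2)
  | 1, 1 => b2 * (1 - 2 * x2 - a2 * x1 - d2 * x4)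
  | 1, 3 => - (b2 * d2 * x2)
  | 2, 1 => b3
  | 2, 2 => - b3
  | 3, 1 => - (b4 * d4 * x4)
  | 3, 3 => - (b4 * (1 + d4 * x2))
  | _, _ => 0
  end.

Lemma jacE (a1 a2 b2 b3 b4 d1 d2 d4 x1 x2 x3 x4 : R) :
  Defs.jacobian (rhs a1 a2 b2 b3 b4 d1 d2 d4) (pt4 x1 x2 x3 x4) =
  \matrix_(i < 4, j < 4) J4 a1 a2 b2 b3 b4 d1 d2 d4 x1 x2 x3 x4 i j.
Proof.
apply/matrixP => i j; rewrite !mxE.
case: i => [[|[|[|[|i]]]] Hi] //; case: j => [[|[|[|[|j]]]] Hj] //;
  rewrite /rhs /upd /pt4 /= !inordE //= !inordK //=.
- by rewrite (@dq _ (-1) (1 - a1 * x2 - d1 * x3)) /J4 => [|t]; ring.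
- by rewrite (@dq _ 0 (- (a1 * x1))) /J4 => [|t]; ring.
- by rewrite (@dq _ 0 (- (d1 * x1))) /J4 => [|t]; ring.
- by rewrite (@dq _ 0 0) /J4 => [|t]; ring.
- by rewrite (@dq _ 0 (- (b2 * a2 * x2))) /J4 => [|t]; ring.
- by rewrite (@dq _ (- b2) (b2 * (1 - a2 * x1 - d2 * x4))) /J4 => [|t]; ring.
- by rewrite (@dq _ 0 0) /J4 => [|t]; ring.
- by rewrite (@dq _ 0 (- (b2 * d2 * x2))) /J4 => [|t]; ring.
- by rewrite (@dq _ 0 0) /J4 => [|t]; ring.
- by rewrite (@dq _ 0 b3) /J4 => [|t]; ring.
- by rewrite (@dq _ 0 (- b3)) /J4 => [|t]; ring.
- by rewrite (@dq _ 0 0) /J4 => [|t]; ring.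
- by rewrite (@dq _ 0 0) /J4 => [|t]; ring.
- by rewrite (@dq _ 0 (- (b4 * d4 * x4))) /J4 => [|t]; ring.
- by rewrite (@dq _ 0 0) /J4 => [|t]; ring.
- by rewrite (@dq _ 0 (- (b4 * (1 + d4 * x2)))) /J4 => [|t]; ring.
Qed.
End J.
Section C.
Variable R : realType.
Local Open Scope complex_scope.
Lemma mulC (a b c d : R) : Complex a b * Complex c d = Complex (a*c - b*d) (a*d+b*c).
Proof. by []. Qed.
Lemma addC (a b c d : R) : Complex a b + Complex c d = Complex (a+c) (b+d).
Proof. by []. Qed.
Lemma realC (a : R) : a%:C = Complex a 0.
Proof. by []. Qed.

Lemma quadE (p q a b : R) :
  (Complex a b) ^+ 2 + p%:C * Complex a b + q%:C =
  Complex (a * a - b * b + p * a + q) (2 * a * b + p * b).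
Proof.
rewrite expr2 !realC !mulC !addC; congr Complex; ring.
Qed.

Definition charq (k3 k2 k1 k0 : R) (z : R[i]) : R[i] :=
  z ^+ 4 + k3%:C * z ^+ 3 + k2%:C * z ^+ 2 + k1%:C * z + k0%:C.

Lemma charqE (k3 k2 k1 k0 a b : R) :
  charq k3 k2 k1 k0 (Complex a b) =
  Complex (a^+4 - 6 * a^+2 * b^+2 + b^+4 + k3 * (a^+3 - 3 * a * b^+2)
             + k2 * (a^+2 - b^+2) + k1 * a + k0)
          (4 * a^+3 * b - 4 * a * b^+3 + k3 * (3 * a^+2 * b - b^+3)
             + k2 * (2 * a * b) + k1 * b).
Proof.
rewrite /charq !exprS expr0 !mulr1 !realC !mulC !addC; congr Complex; ring.
Qed.

Lemma root4 (k3 k2 k1 k0 : R) : exists z, charq k3 k2 k1 k0 z = 0.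
Proof.
have [z Hz] := @solve_monicpoly R[i] 4
  (fun i => - nth 0 [:: k0%:C; k1%:C; k2%:C; k3%:C] i) isT.
exists z; move: Hz; rewrite !big_ord_recr big_ord0 /= /charq => ->.
rewrite expr0 expr1; ring.
Qed.

Lemma root3 (e2 e1 e0 : R) : exists z : R[i],
  z ^+ 3 + e2%:C * z ^+ 2 + e1%:C * z + e0%:C = 0.
Proof.
have [z Hz] := @solve_monicpoly R[i] 3
  (fun i => - nth 0 [:: e0%:C; e1%:C; e2%:C] i) isT.
exists z; move: Hz; rewrite !big_ord_recr big_ord0 /= => ->.
rewrite expr0 expr1; ring.
Qed.

Definition factP (k3 k2 k1 k0 P Q r t : R) :=
  k3 = P + r /\ k2 = Q + t + P * r /\ k1 = P * t + r * Q /\ k0 = Q * t.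

Lemma fact_nonreal (k3 k2 k1 k0 a b : R) : b != 0 ->
  charq k3 k2 k1 k0 (Complex a b) = 0 ->
  exists P Q r t, factP k3 k2 k1 k0 P Q r t.
Proof.
move=> hb; rewrite charqE => -[E1 E2].
pose P := - (2 * a); pose Q := a ^+ 2 + b ^+ 2; pose r := k3 - P;
pose t := k2 - Q - P * r.
have hal : (k1 - (P * t + r * Q)) * b = 0.
  by rewrite -E2 /t /r /Q /P; ring.
have ha : k1 - (P * t + r * Q) = 0.
  by move: hal => /eqP; rewrite mulf_eq0 (negPf hb) orbF => /eqP.
have hbe : k0 - Q * t = 0.
  have -> : k0 - Q * t = (a ^+ 4 - 6 * a ^+ 2 * b ^+ 2 + b ^+ 4 + k3 * (a ^+ 3 - 3 * a * b ^+ 2) +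
      k2 * (a ^+ 2 - b ^+ 2) + k1 * a + k0) - a * (k1 - (P * t + r * Q)) by rewrite /t /r /Q /P; ring.
  by rewrite E1 ha; ring.
exists P, Q, r, t; split; first by rewrite /r; ring.
split; first by rewrite /t; ring.
split; first by apply/eqP; rewrite -subr_eq0 ha.
by apply/eqP; rewrite -subr_eq0 hbe.
Qed.

Lemma fact_exists (k3 k2 k1 k0 : R) : exists P Q r t, factP k3 k2 k1 k0 P Q r t.
Proof.
have [[a b] Hz] := root4 k3 k2 k1 k0.
have [hb|hb] := eqVneq b 0; last exact: fact_nonreal Hz.
subst b.
have E1 : k0 + a * (k1 + a * (k2 + a * (k3 + a))) = 0.
  by move: Hz; rewrite charqE => -[<- _]; ring.
have [[c d] Hc] := root3 (k3 + a) (k2 + a * (k3 + a)) (k1 + a * (k2 + a * (k3 + a))).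
have [hd|hd] := eqVneq d 0; last first.
  apply: (@fact_nonreal _ _ _ _ c d hd).
  have -> : charq k3 k2 k1 k0 (Complex c d) =
     (Complex c d - a%:C) * (Complex c d ^+ 3 + (k3 + a)%:C * Complex c d ^+ 2 +
        (k2 + a * (k3 + a))%:C * Complex c d + (k1 + a * (k2 + a * (k3 + a)))%:C)
     + (k0 + a * (k1 + a * (k2 + a * (k3 + a))))%:C.
    by rewrite /charq !(rmorphD, rmorphM); ring.
  by rewrite Hc E1 mulr0 add0r.
subst d.
have E2 : (k1 + a * (k2 + a * (k3 + a))) + c * ((k2 + a * (k3 + a)) + c * ((k3 + a) + c)) = 0.
  move: Hc; rewrite -realC -!(rmorphXn, rmorphM, rmorphD) => /complexI <-; ring.
exists (- (a + c)), (a * c), ((k3 + a) + c), ((k2 + a * (k3 + a)) + c * ((k3 + a) + c)).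
split; first by ring.
split; first by ring.
split.
  apply/eqP; rewrite -subr_eq0; apply/eqP.
  by rewrite -E2; ring.
apply/eqP; rewrite -subr_eq0; apply/eqP.
have -> : 0 = (k0 + a * (k1 + a * (k2 + a * (k3 + a)))) - a * ((k1 + a * (k2 + a * (k3 + a))) + c * ((k2 + a * (k3 + a)) + c * ((k3 + a) + c))) by rewrite E1 E2; ring.
ring.
Qed.

Lemma QR (p q : R) :
  (forall z : R[i], z ^+ 2 + p%:C * z + q%:C = 0 -> complex.Re z < 0) <-> (0 < p /\ 0 < q).
Proof.
split => [H|[hp hq] [a b]]; last first.
  rewrite quadE => -[E1 E2] /=.
  have [hb|hb] := eqVneq b 0.
    subst b; rewrite /=; nra.
  have : b * (2 * a + p) = 0 by rewrite -E2; ring.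
  move/eqP; rewrite mulf_eq0 (negPf hb) /= => /eqP h; nra.
have [hD|hD] := lerP 0 (p * p - 4 * q).
  have hs := sqr_sqrtr hD; have hs0 := sqrtr_ge0 (p * p - 4 * q).
  have := H (Complex ((- p + Num.sqrt (p * p - 4 * q)) / 2) 0).
  rewrite quadE /= => h.
  have {h} h : (- p + Num.sqrt (p * p - 4 * q)) / 2 < 0.
    apply: h; congr Complex; last by ring.
    rewrite expr2 in hs.
    set sq := Num.sqrt _ in hs *.
    have -> : (- p + sq) / 2 * ((- p + sq) / 2) - 0 * 0 + p * ((- p + sq) / 2) + q =
              (sq * sq - (p * p - 4 * q)) / 4 by field.
    by rewrite hs subrr mul0r.
  nra.
have hD' : 0 <= - (p * p - 4 * q) by lra.
have hs := sqr_sqrtr hD'; have hs0 := sqrtr_ge0 (- (p * p - 4 * q)).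
have := H (Complex (- p / 2) (Num.sqrt (- (p * p - 4 * q)) / 2)).
rewrite quadE /= => h.
have {h} h : - p / 2 < 0.
  apply: h; congr Complex; last by field.
  rewrite expr2 in hs.
  set sq := Num.sqrt _ in hs *.
  have -> : sq / 2 * (sq / 2) = (sq * sq) / 4 by field.
  by rewrite hs; field.
split; nra.
Qed.

Lemma charq_fact (P Q r t : R) (z : R[i]) :
  charq (P + r) (Q + t + P * r) (P * t + r * Q) (Q * t) z =
  (z ^+ 2 + P%:C * z + Q%:C) * (z ^+ 2 + r%:C * z + t%:C).
Proof. rewrite /charq !(rmorphD, rmorphM); ring. Qed.

Lemma stab_PQrt (P Q r t : R) :
  (forall z, charq (P + r) (Q + t + P * r) (P * t + r * Q) (Q * t) z = 0 ->
     complex.Re z < 0) <-> ((0 < P /\ 0 < Q) /\ (0 < r /\ 0 < t)).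
Proof.
split => [H|[/QR H1 /QR H2] z].
  split; apply/QR => z hz; apply: H; rewrite charq_fact hz ?mul0r ?mulr0 //.
rewrite charq_fact => /eqP; rewrite mulf_eq0 => /orP[] /eqP; [exact: H1|exact: H2].
Qed.

Lemma hurwitz (k3 k2 k1 k0 : R) :
  (forall z, charq k3 k2 k1 k0 z = 0 -> complex.Re z < 0) <->
  (0 < k3 /\ 0 < k1 /\ 0 < k0 /\ k1 ^+ 2 + k3 ^+ 2 * k0 < k1 * k2 * k3).
Proof.
have [P [Q [r [t [-> [-> [-> ->]]]]]]] := fact_exists k3 k2 k1 k0.
rewrite stab_PQrt.
have Hd : (P * t + r * Q) * (Q + t + P * r) * (P + r) - ((P * t + r * Q) ^+ 2 + (P + r) ^+ 2 * (Q * t))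
   = P * r * ((Q - t) ^+ 2 + (P + r) * (P * t + r * Q)) by ring.
split.
  move=> [[hP hQ] [hr ht]].
  have h1 : 0 < P * t + r * Q by rewrite addr_gt0 // mulr_gt0.
  have h2 : 0 < P + r by rewrite addr_gt0.
  have h3 : 0 < Q * t by rewrite mulr_gt0.
  split => //; split => //; split => //.
  rewrite -subr_gt0 Hd; apply: mulr_gt0; first by rewrite mulr_gt0.
  by rewrite ltr_pwDr ?sqr_ge0 // mulr_gt0.
move=> [h2 [h1 [h3 h4]]].
have : 0 < P * r * ((Q - t) ^+ 2 + (P + r) * (P * t + r * Q)) by rewrite -Hd subr_gt0.
have hX : 0 < (Q - t) ^+ 2 + (P + r) * (P * t + r * Q).
  by rewrite ltr_pwDr ?sqr_ge0 // mulr_gt0.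
rewrite pmulr_lgt0 // => hPr.
have hP : 0 < P by nra.
have hr : 0 < r by nra.
have hQ : 0 < Q by nra.
have ht : 0 < t by nra.
by [].
Qed.
End C.
Section B.
Variable R : realType.
Variables (a1 a2 b2 b3 b4 d1 d2 d4 : R).
Local Notation F := (rhs a1 a2 b2 b3 b4 d1 d2 d4).
Local Open Scope complex_scope.

Lemma char_charq (m : nat -> nat -> R) (z : R[i]) :
  z ^+ 4 - (ek1 m)%:C * z ^+ 3 + (ek2 m)%:C * z ^+ 2 - (ek3 m)%:C * z + (ek4 m)%:C =
  charq (- ek1 m) (ek2 m) (- ek3 m) (ek4 m) z.
Proof. rewrite /charq !rmorphN; ring. Qed.

Lemma stableE x1 x2 x3 x4 :
  lin_stable F (pt4 x1 x2 x3 x4) <->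
  (forall z, charq (- ek1 (J4 a1 a2 b2 b3 b4 d1 d2 d4 x1 x2 x3 x4))
                   (ek2 (J4 a1 a2 b2 b3 b4 d1 d2 d4 x1 x2 x3 x4))
                   (- ek3 (J4 a1 a2 b2 b3 b4 d1 d2 d4 x1 x2 x3 x4))
                   (ek4 (J4 a1 a2 b2 b3 b4 d1 d2 d4 x1 x2 x3 x4)) z = 0 ->
     complex.Re z < 0).
Proof.
rewrite /lin_stable jacE; split => H z hz; apply: H.
  by apply/eig_char; rewrite char_charq.
by move/eig_char: hz; rewrite char_charq.
Qed.

Lemma unstableE x1 x2 x3 x4 :
  (exists z, charq (- ek1 (J4 a1 a2 b2 b3 b4 d1 d2 d4 x1 x2 x3 x4))
                   (ek2 (J4 a1 a2 b2 b3 b4 d1 d2 d4 x1 x2 x3 x4))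
                   (- ek3 (J4 a1 a2 b2 b3 b4 d1 d2 d4 x1 x2 x3 x4))
                   (ek4 (J4 a1 a2 b2 b3 b4 d1 d2 d4 x1 x2 x3 x4)) z = 0 /\
     0 < complex.Re z) ->
  lin_unstable F (pt4 x1 x2 x3 x4).
Proof.
move=> [z [hz hr]]; exists z; split => //.
by rewrite jacE; apply/eig_char; rewrite char_charq.
Qed.

Lemma ssE x1 x2 x3 x4 :
  x1 * (1 - x1 - a1 * x2 - d1 * x3) = 0 ->
  b2 * x2 * (1 - x2 - a2 * x1 - d2 * x4) = 0 ->
  b3 * (x2 - x3) = 0 ->
  b4 * (1 - x4 - d4 * x4 * x2) = 0 ->
  steady_state F (pt4 x1 x2 x3 x4).
Proof.
move=> h1 h2 h3 h4 [[|[|[|[|i]]]] Hi] //; rewrite /rhs /pt4 /= !inordK //.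
Qed.

Lemma ek_ext (m m' : nat -> nat -> R) :
  (forall i j, (i < 4)%N -> (j < 4)%N -> m i j = m' i j) ->
  [/\ ek1 m = ek1 m', ek2 m = ek2 m', ek3 m = ek3 m' & ek4 m = ek4 m'].
Proof. by move=> H; split; rewrite /ek1 /ek2 /ek3 /ek4 !H. Qed.

Definition Jc (g v x y : R) (i j : nat) : R :=
  match i, j with
  | 0, 0 => g
  | 0, 1 => - (a1 * v)
  | 0, 2 => - (d1 * v)
  | 1, 0 => - (b2 * a2 * x)
  | 1, 1 => - (b2 * x)
  | 1, 3 => - (b2 * d2 * x)
  | 2, 1 => b3
  | 2, 2 => - b3
  | 3, 1 => - (b4 * d4 * y)
  | 3, 3 => - (b4 * (1 + d4 * x))
  | _, _ => 0
  end.

Lemma J4_Jc g v x y :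
  1 - 2 * v - a1 * x - d1 * x = g ->
  1 - x - a2 * v - d2 * y = 0 ->
  forall i j, (i < 4)%N -> (j < 4)%N -> J4 a1 a2 b2 b3 b4 d1 d2 d4 v x x y i j = Jc g v x y i j.
Proof.
move=> hg hs [|[|[|[|i]]]] [|[|[|[|j]]]] //= _ _; rewrite /J4 /Jc //.
have -> : 1 - 2 * x - a2 * v - d2 * y = (1 - x - a2 * v - d2 * y) - x by ring.
by rewrite hs; ring.
Qed.
End B.
Section S.
Variable R : realType.
Local Open Scope complex_scope.

Lemma charq_real (k3 k2 k1 k0 l : R) :
  charq k3 k2 k1 k0 (l%:C) = (l ^+ 4 + k3 * l ^+ 3 + k2 * l ^+ 2 + k1 * l + k0)%:C.
Proof. by rewrite /charq !(rmorphD, rmorphM, rmorphXn). Qed.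

Lemma unst_real (k3 k2 k1 k0 l : R) : 0 < l ->
  l ^+ 4 + k3 * l ^+ 3 + k2 * l ^+ 2 + k1 * l + k0 = 0 ->
  exists z, charq k3 k2 k1 k0 z = 0 /\ 0 < complex.Re z.
Proof. by move=> hl h; exists l%:C; rewrite charq_real h. Qed.

Variables (a1 a2 b2 b3 b4 d1 d2 d4 : R).
Hypotheses (ha1 : 0 < a1) (ha2 : 0 < a2) (hb2 : 0 < b2) (hb3 : 0 < b3)
  (hb4 : 0 < b4) (hd1 : 0 < d1) (hd2 : 0 < d2) (hd4 : 0 < d4).
Local Notation F := (rhs a1 a2 b2 b3 b4 d1 d2 d4).

Lemma SS1 : steady_state F (pt4 0 0 0 1) /\ lin_unstable F (pt4 0 0 0 1).
Proof.
split; first by apply: ssE; ring.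
apply: unstableE; apply: (@unst_real _ _ _ _ 1) => //.
rewrite /ek1 /ek2 /ek3 /ek4 /J4 /=; ring.
Qed.

Lemma SS2 : steady_state F (pt4 1 0 0 1) /\
  (lin_stable F (pt4 1 0 0 1) <-> 1 < a2 + d2).
Proof.
split; first by apply: ssE; ring.
rewrite stableE.
pose mu := b2 * (1 - a2 - d2).
have [-> [-> [-> ->]]] : factP (- ek1 (J4 a1 a2 b2 b3 b4 d1 d2 d4 1 0 0 1))
   (ek2 (J4 a1 a2 b2 b3 b4 d1 d2 d4 1 0 0 1)) (- ek3 (J4 a1 a2 b2 b3 b4 d1 d2 d4 1 0 0 1))
   (ek4 (J4 a1 a2 b2 b3 b4 d1 d2 d4 1 0 0 1)) (1 - mu) (- mu) (b3 + b4) (b3 * b4).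
  by rewrite /factP /ek1 /ek2 /ek3 /ek4 /J4 /mu /=; split; [|split; [|split]]; ring.
rewrite stab_PQrt /mu; split.
  by move=> [[_ h] _]; move: h; rewrite -mulrN pmulr_rgt0 //; lra.
move=> h; have h' : b2 * (1 - a2 - d2) < 0 by rewrite pmulr_rlt0 //; lra.
split; split; try lra; [exact: addr_gt0|exact: mulr_gt0].
Qed.
End S.
Section S.
Variable R : realType.
Local Open Scope complex_scope.

Lemma unst_fact (k3 k2 k1 k0 P Q r t : R) : factP k3 k2 k1 k0 P Q r t ->
  (exists l, 0 < l /\ (l ^+ 2 + P * l + Q = 0 \/ l ^+ 2 + r * l + t = 0)) ->
  exists z, charq k3 k2 k1 k0 z = 0 /\ 0 < complex.Re z.
Proof.
move=> [-> [-> [-> ->]]] [l [hl hq]]; apply: (unst_real hl).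
have -> : l ^+ 4 + (P + r) * l ^+ 3 + (Q + t + P * r) * l ^+ 2 + (P * t + r * Q) * l + Q * t
  = (l ^+ 2 + P * l + Q) * (l ^+ 2 + r * l + t) by ring.
by case: hq => ->; rewrite ?mul0r ?mulr0.
Qed.

Lemma posroot (r t : R) : t < 0 -> exists l, 0 < l /\ l ^+ 2 + r * l + t = 0.
Proof.
move=> ht; have hD : 0 <= r ^+ 2 - 4 * t by nra.
have hs := sqr_sqrtr hD; have hs0 := sqrtr_ge0 (r ^+ 2 - 4 * t).
set S := Num.sqrt _ in hs hs0.
exists ((- r + S) / 2); split.
  have : r < S by nra.
  lra.
have -> : ((- r + S) / 2) ^+ 2 + r * ((- r + S) / 2) + t = (S ^+ 2 - (r ^+ 2 - 4 * t)) / 4 by field.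
by rewrite hs subrr mul0r.
Qed.

Variables (a1 a2 b2 b3 b4 d1 d2 d4 : R).
Hypotheses (ha1 : 0 < a1) (ha2 : 0 < a2) (hb2 : 0 < b2) (hb3 : 0 < b3)
  (hb4 : 0 < b4) (hd1 : 0 < d1) (hd2 : 0 < d2) (hd4 : 0 < d4).
Local Notation F := (rhs a1 a2 b2 b3 b4 d1 d2 d4).

Lemma SS3_common (e sq : R) : e * e = 1 -> 0 <= sq ->
  sq ^+ 2 = (1 + d4) ^+ 2 - 4 * d2 * d4 ->
  let x := (d4 - 1 + e * sq) / (2 * d4) in
  let y := (1 + d4 * x)^-1 in
  let g := 1 - (a1 + d1) * x in
  steady_state F (pt4 0 x x y) /\
  factP (- ek1 (J4 a1 a2 b2 b3 b4 d1 d2 d4 0 x x y))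
        (ek2 (J4 a1 a2 b2 b3 b4 d1 d2 d4 0 x x y))
        (- ek3 (J4 a1 a2 b2 b3 b4 d1 d2 d4 0 x x y))
        (ek4 (J4 a1 a2 b2 b3 b4 d1 d2 d4 0 x x y))
        (b3 - g) (- (g * b3)) (b2 * x + b4 * (1 + d4 * x)) (b2 * b4 * x * (e * sq)).
Proof.
move=> he hsq0 hsq x y g.
have d4n : d4 != 0 by rewrite gt_eqF.
have hX : 2 * d4 * x - (d4 - 1) = e * sq by rewrite /x; field.
have Q3 : d4 * x ^+ 2 - (d4 - 1) * x + (d2 - 1) = 0.
  apply: (@mulfI _ (4 * d4)); first by rewrite mulf_neq0 // (@pnatr_eq0 R 4).
  rewrite mulr0.
  have -> : 4 * d4 * (d4 * x ^+ 2 - (d4 - 1) * x + (d2 - 1)) =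
    (2 * d4 * x - (d4 - 1)) ^+ 2 - ((1 + d4) ^+ 2 - 4 * d2 * d4) by ring.
  by rewrite hX -hsq exprMn expr2 he mul1r subrr.
have wn : 1 + d4 * x != 0.
  apply/eqP => hw.
  have : d4 * (d4 * x ^+ 2 - (d4 - 1) * x + (d2 - 1)) = d4 * d2.
    have -> : d4 * (d4 * x ^+ 2 - (d4 - 1) * x + (d2 - 1)) =
       (d4 * x) ^+ 2 - (d4 - 1) * (d4 * x) + d4 * (d2 - 1) by ring.
    have -> : d4 * x = -1 by lra.
    ring.
  rewrite Q3 mulr0 => /eqP; rewrite eq_sym mulf_eq0 (negPf d4n) /= => /eqP h.
  by move: hd2; rewrite h ltxx.
have hy : y * (1 + d4 * x) = 1 by rewrite /y mulVf.
have hrel : 1 - x - a2 * 0 - d2 * y = 0.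
  apply: (@mulIf _ (1 + d4 * x)) => //; rewrite mul0r.
  have -> : (1 - x - a2 * 0 - d2 * y) * (1 + d4 * x) =
     - (d4 * x ^+ 2 - (d4 - 1) * x + (d2 - 1)) - d2 * (y * (1 + d4 * x) - 1) by ring.
  by rewrite Q3 hy subrr; ring.
split.
  apply: ssE; [ring| |ring|].
    by rewrite hrel mulr0.
  have -> : 1 - y - d4 * y * x = 1 - y * (1 + d4 * x) by ring.
  by rewrite hy subrr mulr0.
have hg : 1 - 2 * 0 - a1 * x - d1 * x = g by rewrite /g; ring.
have [-> -> -> ->] := ek_ext (@J4_Jc R a1 a2 b2 b3 b4 d1 d2 d4 g 0 x y hg hrel).
have ht : 1 + d4 * x - d2 * d4 * y = e * sq.
  apply: (@mulIf _ (1 + d4 * x)) => //.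
  have -> : (1 + d4 * x - d2 * d4 * y) * (1 + d4 * x) =
     (1 + d4 * x) ^+ 2 - d2 * d4 * (y * (1 + d4 * x)) by ring.
  rewrite hy mulr1.
  have -> : 1 + d4 * x = (1 + d4 + e * sq) / 2 by rewrite /x; field.
  apply: (@mulfI _ 4); first by rewrite (@pnatr_eq0 R 4).
  have -> : 4 * (((1 + d4 + e * sq) / 2) ^+ 2 - d2 * d4) =
    (1 + d4) ^+ 2 + 2 * (1 + d4) * (e * sq) + (e * e) * sq ^+ 2 - 4 * d2 * d4 by field.
  have -> : 4 * (e * sq * ((1 + d4 + e * sq) / 2)) =
    2 * (1 + d4) * (e * sq) + 2 * (e * e) * sq ^+ 2 by field.
  rewrite he hsq; ring.
rewrite /factP /ek1 /ek2 /ek3 /ek4 /Jc /=.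
split; first by ring.
rewrite -ht.
split; first by ring.
split; ring.
Qed.

Lemma SS3m :
  let D3 := (1 + d4) ^+ 2 - 4 * d2 * d4 in
  let u2m := (d4 - 1 - Num.sqrt D3) / (2 * d4) in
  let P3m := pt4 0 u2m u2m (1 + d4 * u2m)^-1 in
  0 < D3 -> steady_state F P3m /\ lin_unstable F P3m.
Proof.
move=> D3 u2m P3m hD.
have hsq := sqr_sqrtr (ltW hD); have hsq0 := sqrtr_ge0 D3.
have he : (-1 : R) * -1 = 1 by ring.
have := SS3_common he hsq0 hsq; rewrite /= mulN1r.
rewrite -/D3 -/u2m => -[hss hf]; split => //.
apply: unstableE; apply: (unst_fact hf).
have [hg|hg] := ltrP 0 (1 - (a1 + d1) * u2m).
  exists (1 - (a1 + d1) * u2m); split => //; left; ring.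
have hx : 0 < u2m.
  have hs : 0 < a1 + d1 by rewrite addr_gt0.
  have h1 : 1 <= (a1 + d1) * u2m by lra.
  rewrite ltNge; apply/negP => hx.
  have : (a1 + d1) * u2m <= 0 by rewrite pmulr_rle0.
  lra.
have hs : 0 < Num.sqrt D3.
  rewrite lt_neqAle hsq0 andbT; apply/eqP => h; move: hsq; rewrite -h expr2 mul0r => h0.
  by move: hD; rewrite -h0 ltxx.
have ht : b2 * b4 * u2m * (- Num.sqrt D3) < 0.
  rewrite mulrN oppr_lt0; apply: mulr_gt0 => //; apply: mulr_gt0 => //; exact: mulr_gt0.
have [l [hl hq]] := posroot (b2 * u2m + b4 * (1 + d4 * u2m)) ht.
by exists l; split => //; right.
Qed.

Lemma SS3p_real (sq : R) : 0 <= sq -> sq ^+ 2 = (1 + d4) ^+ 2 - 4 * d2 * d4 ->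
  let s := a1 + d1 in
  let x := (d4 - 1 + sq) / (2 * d4) in
  let g := 1 - s * x in
  let T := (s + d4) * (s - 1) / s ^+ 2 in
  ((0 < b3 - g /\ 0 < - (g * b3)) /\
   (0 < b2 * x + b4 * (1 + d4 * x) /\ 0 < b2 * b4 * x * sq)) <->
  (d2 < T \/ ((T <= d2 /\ d2 < (1 + d4) ^+ 2 / (4 * d4)) /\ 1 / d4 < (s - 2) / s)).
Proof.
move=> hsq0 hsq s x g T.
have ha1' := ha1; have ha2' := ha2; have hb2' := hb2; have hb3' := hb3; have hb4' := hb4;
have hd1' := hd1; have hd2' := hd2; have hd4' := hd4.
have hs : 0 < s by rewrite addr_gt0.
have hs2 : 0 < s ^+ 2 by rewrite exprn_gt0.
have d4n : d4 != 0 by rewrite gt_eqF.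
pose m := s + 2 * d4 - s * d4.
have key : s ^+ 2 * sq ^+ 2 - m ^+ 2 = 4 * d4 * ((s + d4) * (s - 1) - d2 * s ^+ 2).
  by rewrite hsq /m; ring.
have hsx : (1 < s * x) <-> (m < s * sq).
  have -> : s * x = (s * (d4 - 1 + sq)) / (2 * d4) by rewrite /x; field.
  have h4 : 0 < 2 * d4 by rewrite mulr_gt0.
  rewrite ltr_pdivlMr // /m; split => h; lra.
have C1 : (d2 < T) <-> (d2 * s ^+ 2 < (s + d4) * (s - 1)) by rewrite /T ltr_pdivlMr.
have C2 : (d2 < (1 + d4) ^+ 2 / (4 * d4)) <-> (0 < sq ^+ 2).
  have h4 : 0 < 4 * d4 by rewrite mulr_gt0.
  rewrite ltr_pdivlMr //; rewrite hsq; split => h; lra.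
have C3 : (1 / d4 < (s - 2) / s) <-> (m < 0).
  have h4 : 0 < d4 * s by rewrite mulr_gt0.
  rewrite -(ltr_pM2r h4).
  have -> : 1 / d4 * (d4 * s) = s by field.
  have -> : (s - 2) / s * (d4 * s) = (s - 2) * d4 by field; rewrite gt_eqF.
  by rewrite /m; split => h; lra.
have LHS : ((0 < b3 - g /\ 0 < - (g * b3)) /\
   (0 < b2 * x + b4 * (1 + d4 * x) /\ 0 < b2 * b4 * x * sq)) <-> (1 < s * x /\ 0 < sq).
  split.
    move=> [[_ h1] [_ h2]].
    have hg : g < 0 by move: h1; rewrite -mulNr pmulr_lgt0 // oppr_gt0.
    have h1x : 1 < s * x by rewrite /g in hg; lra.
    have hx : 0 < x by move: h1x => /(lt_trans ltr01); rewrite pmulr_rgt0.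
    split => //; move: h2; rewrite pmulr_rgt0 //; exact: mulr_gt0 (mulr_gt0 hb2 hb4) hx.
  move=> [h1x hsq'].
  have hx : 0 < x by move: h1x => /(lt_trans ltr01); rewrite pmulr_rgt0.
  have hg : g < 0 by rewrite /g; lra.
  split; split.
  - lra.
  - by rewrite -mulNr mulr_gt0 // oppr_gt0.
  - apply: addr_gt0; first exact: mulr_gt0.
    apply: mulr_gt0 => //; apply: addr_gt0 => //; exact: mulr_gt0.
  - apply: mulr_gt0 => //; apply: mulr_gt0 => //; exact: mulr_gt0.
rewrite LHS hsx C1 C2 C3.
have hsqs : 0 <= s * sq by rewrite mulr_ge0 // ltW.
split.
  move=> [hm hp].
  case: (ltrP (d2 * s ^+ 2) ((s + d4) * (s - 1))) => hc; first by left.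
  right; split; last first.
    rewrite ltNge; apply/negP => hm0.
    have : m ^+ 2 < (s * sq) ^+ 2 by rewrite ltr_pXn2r // ?nnegrE // ltW.
    rewrite exprMn; nra.
  split; last by rewrite exprn_gt0.
  by rewrite /T ler_pdivrMr.
move=> [hc|[[_ hp] hm]].
  have hk : m ^+ 2 < s ^+ 2 * sq ^+ 2.
    by rewrite -subr_gt0 key; apply: mulr_gt0; [rewrite mulr_gt0|rewrite subr_gt0].
  have hsp : 0 < sq.
    rewrite lt_neqAle hsq0 andbT; apply/eqP => h; move: hk; rewrite -h expr0n /= mulr0.
    by rewrite ltNge sqr_ge0.
  split => //; rewrite ltNge; apply/negP => hm'.
  have : (s * sq) ^+ 2 <= m ^+ 2 by rewrite !expr2; nra.
  rewrite exprMn; lra.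
have hsp : 0 < sq.
  rewrite lt_neqAle hsq0 andbT; apply/eqP => h; move: hp; rewrite -h expr0n /= ltxx.
  by [].
split => //; apply: (lt_le_trans hm); exact: hsqs.
Qed.

Lemma SS3p :
  let s := a1 + d1 in
  let D3 := (1 + d4) ^+ 2 - 4 * d2 * d4 in
  let u2p := (d4 - 1 + Num.sqrt D3) / (2 * d4) in
  let P3p := pt4 0 u2p u2p (1 + d4 * u2p)^-1 in
  let T := (s + d4) * (s - 1) / s ^+ 2 in
  0 <= D3 -> steady_state F P3p /\
      (lin_stable F P3p <->
         d2 < T \/
         ((T <= d2 /\ d2 < (1 + d4) ^+ 2 / (4 * d4)) /\ 1 / d4 < (s - 2) / s)).
Proof.
move=> s D3 u2p P3p T hD.
have hsq := sqr_sqrtr hD; have hsq0 := sqrtr_ge0 D3.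
have he : (1 : R) * 1 = 1 by ring.
have := SS3_common he hsq0 hsq; rewrite /= mul1r.
rewrite -/D3 -/u2p => -[hss hf]; split => //.
rewrite stableE.
case: hf => [-> [-> [-> ->]]].
rewrite stab_PQrt.
exact: (SS3p_real hsq0 hsq).
Qed.
End S.
Section S.
Variable R : realType.
Local Open Scope complex_scope.
Variables (a1 a2 b2 b3 b4 d1 d2 d4 : R).
Hypotheses (ha1 : 0 < a1) (ha2 : 0 < a2) (hb2 : 0 < b2) (hb3 : 0 < b3)
  (hb4 : 0 < b4) (hd1 : 0 < d1) (hd2 : 0 < d2) (hd4 : 0 < d4).
Local Notation F := (rhs a1 a2 b2 b3 b4 d1 d2 d4).

Definition c3f (up : R) :=
  let s := a1 + d1 in let v := 1 - s * up in let w := 1 + d4 * up in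
  v + b3 + b2 * up + b4 * w.
Definition c2f (up : R) :=
  let s := a1 + d1 in let v := 1 - s * up in let w := 1 + d4 * up in
  b3 * (b2 * up + b4 * w)
             + v * (b3 + b4 * w + b2 * up * (1 - a2 * a1))
             + b2 * b4 * up / w * (w ^+ 2 - d2 * d4).
Definition c1f (up : R) :=
  let s := a1 + d1 in let A := 1 - a2 * s in
  let v := 1 - s * up in let w := 1 + d4 * up in
  v * (b2 * b4 * up / w * (w ^+ 2 * (1 - a2 * a1) - d2 * d4)
                  + b3 * b4 * w)
             + b2 * b3 * up * v * A
             + b2 * b3 * b4 * up / w * (w ^+ 2 - d2 * d4).
Definition c0f (up : R) :=
  let s := a1 + d1 in let A := 1 - a2 * s in
  let v := 1 - s * up in let w := 1 + d4 * up in
  b2 * b3 * b4 * up / w * v * (w ^+ 2 * A - d2 * d4).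

Lemma SS4_common (e sq : R) : e * e = 1 -> 0 <= sq ->
  let s := a1 + d1 in
  let A := 1 - a2 * s in
  sq ^+ 2 = (A - d4 * (a2 - 1)) ^+ 2 - 4 * d2 * d4 * A -> A != 0 ->
  let x := (- A - d4 * (a2 - 1) + e * sq) / (2 * d4 * A) in
  let w := 1 + d4 * x in
  let y := w^-1 in
  let v := 1 - s * x in
  steady_state F (pt4 v x x y) /\ w != 0 /\ w ^+ 2 * A - d2 * d4 = e * w * sq /\
  (- ek1 (J4 a1 a2 b2 b3 b4 d1 d2 d4 v x x y) = c3f x /\
   ek2 (J4 a1 a2 b2 b3 b4 d1 d2 d4 v x x y) = c2f x /\
   - ek3 (J4 a1 a2 b2 b3 b4 d1 d2 d4 v x x y) = c1f x /\
   ek4 (J4 a1 a2 b2 b3 b4 d1 d2 d4 v x x y) = c0f x).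
Proof.
move=> he hsq0 s A hsq An x w y v.
have ha1' := ha1; have ha2' := ha2; have hb2' := hb2; have hb3' := hb3; have hb4' := hb4;
have hd1' := hd1; have hd2' := hd2; have hd4' := hd4.
have d4n : d4 != 0 by rewrite gt_eqF.
pose B := A + d4 * (a2 - 1).
have hX : 2 * d4 * A * x + B = e * sq by rewrite /x /B; field; rewrite An d4n.
have Q4 : d4 * A * x ^+ 2 + B * x + (a2 - 1 + d2) = 0.
  apply: (@mulfI _ (4 * d4 * A)); first by rewrite !mulf_neq0 // (@pnatr_eq0 R 4).
  rewrite mulr0.
  have -> : 4 * d4 * A * (d4 * A * x ^+ 2 + B * x + (a2 - 1 + d2)) =
    (2 * d4 * A * x + B) ^+ 2 - ((A - d4 * (a2 - 1)) ^+ 2 - 4 * d2 * d4 * A) by rewrite /B; ring.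
  by rewrite hX -hsq exprMn expr2 he mul1r subrr.
have wn : w != 0.
  apply/eqP => hw.
  have hdx : d4 * x = -1 by rewrite /w in hw; lra.
  have : d4 * (d4 * A * x ^+ 2 + B * x + (a2 - 1 + d2)) = d4 * d2.
    have -> : d4 * (d4 * A * x ^+ 2 + B * x + (a2 - 1 + d2)) =
       A * (d4 * x) ^+ 2 + B * (d4 * x) + d4 * (a2 - 1 + d2) by ring.
    rewrite hdx /B; ring.
  rewrite Q4 mulr0 => /eqP; rewrite eq_sym mulf_eq0 (negPf d4n) /= => /eqP h.
  by move: hd2; rewrite h ltxx.
have hy : y * w = 1 by rewrite /y mulVf.
have hrel : 1 - x - a2 * v - d2 * y = 0.
  apply: (@mulIf _ w) => //; rewrite mul0r.
  have -> : (1 - x - a2 * v - d2 * y) * w =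
     - (d4 * A * x ^+ 2 + B * x + (a2 - 1 + d2)) - d2 * (y * w - 1)
     by rewrite /w /v /B /A /s; ring.
  by rewrite Q4 hy subrr; ring.
have hw2 : w ^+ 2 * A - d2 * d4 = e * w * sq.
  apply: (@mulfI _ (4 * A)); first by rewrite mulf_neq0 // (@pnatr_eq0 R 4).
  have h2Aw : 2 * A * w = (A - d4 * (a2 - 1)) + e * sq.
    by rewrite -hX /w /B; ring.
  have -> : 4 * A * (w ^+ 2 * A - d2 * d4) = (2 * A * w) ^+ 2 - 4 * A * d2 * d4 by ring.
  have -> : 4 * A * (e * w * sq) = 2 * (e * sq) * (2 * A * w) by ring.
  rewrite h2Aw.
  have -> : ((A - d4 * (a2 - 1)) + e * sq) ^+ 2 - 4 * A * d2 * d4 =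
     (A - d4 * (a2 - 1)) ^+ 2 - 4 * d2 * d4 * A + 2 * (e * sq) * (A - d4 * (a2 - 1))
     + (e * e) * sq ^+ 2 by ring.
  have -> : 2 * (e * sq) * ((A - d4 * (a2 - 1)) + e * sq) =
     2 * (e * sq) * (A - d4 * (a2 - 1)) + 2 * (e * e) * sq ^+ 2 by ring.
  rewrite he -hsq; ring.
split.
  apply: ssE.
  - by rewrite /v /s; ring.
  - by rewrite hrel mulr0.
  - by ring.
  - have -> : 1 - y - d4 * y * x = 1 - y * w by rewrite /w; ring.
    by rewrite hy subrr mulr0.
split => //; split => //.
have hg : 1 - 2 * v - a1 * x - d1 * x = - v by rewrite /v /s; ring.
have [-> -> -> ->] := ek_ext (@J4_Jc R a1 a2 b2 b3 b4 d1 d2 d4 (- v) v x y hg hrel).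
rewrite /ek1 /ek2 /ek3 /ek4 /Jc /c3f /c2f /c1f /c0f /= -/s -/A -/v -/w /y.
have hv : v = 1 - (a1 + d1) * x by [].
have hw : w = 1 + d4 * x by [].
have hA : A = 1 - a2 * (a1 + d1) by [].
move: wn hv hw hA; clearbody w v A s x => wn -> hw ->; rewrite hw in wn *.
split; first by ring.
split; first by field; rewrite ?wn.
split; by field; rewrite ?wn.
Qed.

Lemma SS4m :
  let s := a1 + d1 in
  let A := 1 - a2 * s in
  let D4 := (A - d4 * (a2 - 1)) ^+ 2 - 4 * d2 * d4 * A in
  let um := (- A - d4 * (a2 - 1) - Num.sqrt D4) / (2 * d4 * A) in
  let P4m := pt4 (1 - s * um) um um (1 + d4 * um)^-1 in
  A != 0 -> 0 <= D4 ->
  steady_state F P4m /\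
      ((0 < 1 - s * um /\ 0 < um /\ 0 < (1 + d4 * um)^-1) -> ~ lin_stable F P4m).
Proof.
move=> s A D4 um P4m An hD.
have hsq := sqr_sqrtr hD; have hsq0 := sqrtr_ge0 D4.
have he : (-1 : R) * -1 = 1 by ring.
have := SS4_common he hsq0 hsq An.
rewrite /= mulN1r -/s -/A -/D4 -/um.
move=> [hss [wn [hw2 [h3 [h2 [h1 h0]]]]]]; split => //.
move=> [hv [hx hy]]; rewrite stableE h3 h2 h1 h0 hurwitz => -[_ [_ [hc0 _]]].
move: hc0; rewrite /c0f /= -/s -/A hw2.
have -> : b2 * b3 * b4 * um / (1 + d4 * um) * (1 - s * um) * (-1 * (1 + d4 * um) * Num.sqrt D4)
  = - (b2 * b3 * b4 * um * (1 - s * um) * Num.sqrt D4) by field; rewrite wn.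
rewrite oppr_gt0 ltNge => /negP; apply.
apply: mulr_ge0; last exact: hsq0.
apply/ltW; apply: mulr_gt0 => //; apply: mulr_gt0 => //; apply: mulr_gt0 => //; exact: mulr_gt0.
Qed.

Ltac pos := repeat first [ assumption | apply: addr_gt0 | apply: mulr_gt0 | apply: divr_gt0 | rewrite invr_gt0 ].

Lemma SS4p :
  let s := a1 + d1 in
  let A := 1 - a2 * s in
  let D4 := (A - d4 * (a2 - 1)) ^+ 2 - 4 * d2 * d4 * A in
  let up := (- A - d4 * (a2 - 1) + Num.sqrt D4) / (2 * d4 * A) in
  let P4p := pt4 (1 - s * up) up up (1 + d4 * up)^-1 in
  A != 0 -> 0 <= D4 ->
  steady_state F P4p /\
      (lin_stable F P4p <->
         ((0 < s * up /\ s * up < 1) /\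
          (0 < d2 /\ d2 < (A - d4 * (a2 - 1)) ^+ 2 / (4 * d4 * A)) /\
          c3f up ^+ 2 * c0f up + c1f up ^+ 2 < c1f up * c2f up * c3f up)).
Proof.
move=> s A D4 up P4p An hD.
have ha1' := ha1; have ha2' := ha2; have hb2' := hb2; have hb3' := hb3; have hb4' := hb4;
have hd1' := hd1; have hd2' := hd2; have hd4' := hd4.
have hsq := sqr_sqrtr hD; have hsq0 := sqrtr_ge0 D4.
have he : (1 : R) * 1 = 1 by ring.
have := SS4_common he hsq0 hsq An.
rewrite /= mul1r -/s -/A -/D4 -/up.
move=> [hss [wn [hw2 [h3 [h2 [h1 h0]]]]]]; split => //.
rewrite stableE h3 h2 h1 h0 hurwitz.
have hs : 0 < s by rewrite addr_gt0.
set sq := Num.sqrt D4 in hsq hsq0 hw2 *.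
set x := up in wn hw2 *.
have hX : x * (2 * d4 * A) = - A - d4 * (a2 - 1) + sq.
  have h2n : (2 : R) != 0 by rewrite (@pnatr_eq0 R 2).
  have d4n : d4 != 0 by rewrite gt_eqF.
  by rewrite /x /up divfK // !mulf_neq0.
have hc0 : c0f x = b2 * b3 * b4 * (x * (1 - s * x) * sq).
  rewrite /c0f /= -/s -/A hw2; field; exact: wn.
have Aneg : A < 0 -> 0 < x -> False.
  move=> hA hx.
  have h1' : x * (2 * d4 * A) < 0 by rewrite pmulr_rlt0 // pmulr_rlt0 ?mulr_gt0.
  have hB : sq < A + d4 * (a2 - 1) by lra.
  have ha21 : 0 < a2 - 1.
    have : 0 < d4 * (a2 - 1) by lra.
    by rewrite pmulr_rgt0.
  have hDB : sq ^+ 2 = (A + d4 * (a2 - 1)) ^+ 2 - 4 * d4 * A * (a2 - 1 + d2).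
    by rewrite hsq /D4; ring.
  have hpos : 0 < - (4 * d4 * A * (a2 - 1 + d2)).
    rewrite -mulNr; apply: mulr_gt0; last by lra.
    rewrite -mulrN; apply: mulr_gt0; [exact: mulr_gt0|lra].
  have : (A + d4 * (a2 - 1)) ^+ 2 < sq ^+ 2 by lra.
  have : sq ^+ 2 < (A + d4 * (a2 - 1)) ^+ 2 by rewrite !expr2; nra.
  lra.
split.
  move=> [hc3 [hc1 [hc0' hD']]].
  have hK : 0 < b2 * b3 * b4 by pos.
  have hxvs : 0 < x * (1 - s * x) * sq by move: hc0'; rewrite hc0 pmulr_rgt0.
  have hsqp : 0 < sq.
    rewrite lt_neqAle hsq0 andbT; apply/eqP => h; move: hxvs; rewrite -h mulr0 ltxx.
    by [].
  have hxv : 0 < x * (1 - s * x) by move: hxvs; rewrite pmulr_lgt0.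
  have hx : 0 < x.
    rewrite ltNge; apply/negP => hx.
    have hsx : s * x <= 0 by rewrite pmulr_rle0.
    have : x * (1 - s * x) <= 0 by apply: mulr_le0_ge0 => //; lra.
    lra.
  have hv : 0 < 1 - s * x by move: hxv; rewrite pmulr_rgt0.
  have hA : 0 < A.
    case: (ltrgtP A 0) => // hA; first by case: (Aneg hA hx).
    by move: An; rewrite hA eqxx.
  split; first by split; [exact: mulr_gt0|lra].
  split.
    split => //.
    rewrite ltr_pdivlMr; last by pos.
    have : 0 < sq ^+ 2 by rewrite exprn_gt0.
    rewrite hsq /D4; lra.
  by rewrite addrC.
move=> [[hsx hsx1] [[_ hd2b] hD']].
have hx : 0 < x by move: hsx; rewrite pmulr_rgt0.
have hv : 0 < 1 - s * x by lra.
have hA : 0 < A.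
  case: (ltrgtP A 0) => // hA; last by move: An; rewrite hA eqxx.
  have h4 : 4 * d4 * A < 0 by rewrite pmulr_rlt0 ?mulr_gt0.
  move: hd2b; rewrite ltr_ndivlMr // => h.
  have : 0 <= (A - d4 * (a2 - 1)) ^+ 2 by exact: sqr_ge0.
  have : d2 * (4 * d4 * A) < 0 by rewrite pmulr_rlt0.
  lra.
have hsqp : 0 < sq.
  have : 0 < sq ^+ 2.
    rewrite hsq /D4; move: hd2b; rewrite ltr_pdivlMr; last by pos.
    lra.
  move=> hq; rewrite lt_neqAle hsq0 andbT; apply/eqP => h; move: hq; rewrite -h expr0n /= ltxx.
  by [].
have hw : 0 < 1 + d4 * x by pos; exact: ltr01.
have hP0 : 0 < (1 + d4 * x) ^+ 2 * A - d2 * d4 by rewrite hw2 mul1r; pos.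
have hP1 : 0 < (1 + d4 * x) ^+ 2 * (1 - a2 * a1) - d2 * d4.
  have -> : (1 + d4 * x) ^+ 2 * (1 - a2 * a1) - d2 * d4 =
    ((1 + d4 * x) ^+ 2 * A - d2 * d4) + (1 + d4 * x) ^+ 2 * (a2 * d1) by rewrite /A /s; ring.
  by pos; rewrite ?exprn_gt0.
have hP2 : 0 < (1 + d4 * x) ^+ 2 - d2 * d4.
  have -> : (1 + d4 * x) ^+ 2 - d2 * d4 =
    ((1 + d4 * x) ^+ 2 * A - d2 * d4) + (1 + d4 * x) ^+ 2 * (a2 * s) by rewrite /A; ring.
  by pos; rewrite ?exprn_gt0.
split.
  rewrite /c3f /= -/s; pos; exact: ltr01.
split.
  rewrite /c1f /= -/s -/A; pos.
split.
  rewrite hc0; pos.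
by rewrite addrC.
Qed.
End S.
Unset Implicit Arguments.
Theorem lemmaC1 (R : realType) (a1 a2 b2 b3 b4 d1 d2 d4 : R)
  (ha1 : 0 < a1) (ha2 : 0 < a2) (hb2 : 0 < b2) (hb3 : 0 < b3)
  (hb4 : 0 < b4) (hd1 : 0 < d1) (hd2 : 0 < d2) (hd4 : 0 < d4) :
  let F := rhs a1 a2 b2 b3 b4 d1 d2 d4 in
  let s := a1 + d1 in
  (* SS1 *)
  (steady_state F (pt4 0 0 0 1) /\ lin_unstable F (pt4 0 0 0 1)) /\
  (* SS2 *)
  (steady_state F (pt4 1 0 0 1) /\
     (lin_stable F (pt4 1 0 0 1) <-> 1 < a2 + d2)) /\
  (* SS3 *)
  (let D3 := (1 + d4) ^+ 2 - 4 * d2 * d4 in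
   let u2p := (d4 - 1 + Num.sqrt D3) / (2 * d4) in
   let u2m := (d4 - 1 - Num.sqrt D3) / (2 * d4) in
   let P3p := pt4 0 u2p u2p (1 + d4 * u2p)^-1 in
   let P3m := pt4 0 u2m u2m (1 + d4 * u2m)^-1 in
   let T := (s + d4) * (s - 1) / s ^+ 2 in
   (0 < D3 -> steady_state F P3m /\ lin_unstable F P3m) /\
   (0 <= D3 -> steady_state F P3p /\
      (lin_stable F P3p <->
         d2 < T \/
         ((T <= d2 /\ d2 < (1 + d4) ^+ 2 / (4 * d4)) /\ 1 / d4 < (s - 2) / s)))) /\
  (* SS4 *)
  (let A := 1 - a2 * s in
   let D4 := (A - d4 * (a2 - 1)) ^+ 2 - 4 * d2 * d4 * A in
   let up := (- A - d4 * (a2 - 1) + Num.sqrt D4) / (2 * d4 * A) in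
   let um := (- A - d4 * (a2 - 1) - Num.sqrt D4) / (2 * d4 * A) in
   let P4p := pt4 (1 - s * up) up up (1 + d4 * up)^-1 in
   let P4m := pt4 (1 - s * um) um um (1 + d4 * um)^-1 in
   let v := 1 - s * up in
   let w := 1 + d4 * up in
   let c3 := v + b3 + b2 * up + b4 * w in
   let c2 := b3 * (b2 * up + b4 * w)
             + v * (b3 + b4 * w + b2 * up * (1 - a2 * a1))
             + b2 * b4 * up / w * (w ^+ 2 - d2 * d4) in
   let c1 := v * (b2 * b4 * up / w * (w ^+ 2 * (1 - a2 * a1) - d2 * d4)
                  + b3 * b4 * w)
             + b2 * b3 * up * v * A
             + b2 * b3 * b4 * up / w * (w ^+ 2 - d2 * d4) in
   let c0 := b2 * b3 * b4 * up / w * v * (w ^+ 2 * A - d2 * d4) in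
   A != 0 -> 0 <= D4 ->
   (steady_state F P4m /\
      ((0 < 1 - s * um /\ 0 < um /\ 0 < (1 + d4 * um)^-1) -> ~ lin_stable F P4m)) /\
   (steady_state F P4p /\
      (lin_stable F P4p <->
         ((0 < s * up /\ s * up < 1) /\
          (0 < d2 /\ d2 < (A - d4 * (a2 - 1)) ^+ 2 / (4 * d4 * A)) /\
          c3 ^+ 2 * c0 + c1 ^+ 2 < c1 * c2 * c3)))).
Proof.
move=> F s.
split; first by apply: SS1.
split; first by apply: SS2.
split.
  move=> D3 u2p u2m P3p P3m T; split; first by apply: SS3m.
  by apply: SS3p.
move=> A D4 up um P4p P4m v w c3 c2 c1 c0 An hD; split; first by apply: SS4m.
by apply: SS4p.
Qed.
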